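(* Let $a>0$, $n\ge2$, $\lambda=\frac{\pi-2}{a(\pi-4)}$, $s=\frac{\sqrt{2\pi}}{a(\pi-4)}$, $k=\frac{2a}{\sqrt{2\pi}}$, $t=\frac{2}{\sqrt{2\pi}a}$, and let $C=(c_{ij})$ be real with $\sum_i c_{ij}=1$ for all $j$. Suppose real numbers $\rho^i_\infty,q^i_\infty,\gamma^i$ satisfy for all $i$ \[ q^i_\infty-\gamma^i+k\rho^i_\infty=-\sum_jc_{ij}\big(q^j_\infty+\gamma^j-k\rho^j_\infty\big), \] \[ \rho^i_\infty+(\lambda+s)\gamma^i+t\,q^i_\infty=\sum_jc_{ij}\big(\rho^j_\infty+(s-\lambda)\gamma^j-t\,q^j_\infty\big). \] Then $\sum_iq^i_\infty=0$ and $\sum_i\gamma^i=0$. If moreover the node is uniform ($c_{ij}=\frac1{n-1}$ for $i\neq j$, $c_{ii}=0$), then with $m=\frac{n-2}{n}$ each of the quantities \[ m\,q^i_\infty-\gamma^i+k\rho^i_\infty,\qquad \rho^i_\infty+\Big(m+\tfrac{\sqrt{2\pi}}{\pi-2}\Big)\lambda\gamma^i+t\,m\,q^i_\infty,\qquad \rho^i_\infty+\frac{m}{a}\,\frac{4+m\sqrt{2\pi}}{\sqrt{2\pi}+2m}\,q^i_\infty \] is independent of $i$.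
   Context: These equations come from integrating the kinetic coupling $f^i(0,v)=\sum_jc_{ij}f^j(0,-v)$, $v>0$, against $1$ and $v$ over half-ranges and expressing the half-moments at the node through the asymptotic states and layer amplitudes $\gamma^i$ of the half-moment half-space problems (unbounded velocities, Maxwellian $M(v)=(2\pi a^2)^{-1/2}e^{-v^2/(2a^2)}$) on each edge. *)

(* Defs.v *)
From Stdlib Require Import Reals List.
Open Scope R_scope.

Definition sumR (n : nat) (f : nat -> R) : R :=
  fold_right Rplus 0 (map f (seq 0 n)).

(* Main.v *)
Require Import Defs.
From Stdlib Require Import Reals List Lra Lia Arith.
Open Scope R_scope.

Lemma PI_lt4 : PI < 4.
Proof.
  destruct (PI_ineq 1) as [_ H]. simpl in H. unfold tg_alt, PI_tg in H. simpl in H. lra.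
Qed.

Lemma PI_gt3 : 3 < PI.
Proof. pose proof PI2_3_2. lra. Qed.

Lemma sumR_S n f : sumR (S n) f = sumR n f + f n.
Proof.
  unfold sumR. rewrite seq_S, map_app, fold_right_app. simpl.
  generalize (map f (seq 0 n)). intro l; induction l as [|x l IH]; simpl.
  - lra.
  - rewrite IH; lra.
Qed.

Lemma sumR_ext n f g : (forall i, (i < n)%nat -> f i = g i) -> sumR n f = sumR n g.
Proof.
  induction n; intros H; [reflexivity|].
  rewrite !sumR_S, IHn, H; auto.
Qed.

Lemma sumR_zero n : sumR n (fun _ => 0) = 0.
Proof. induction n; [reflexivity|]. rewrite sumR_S, IHn; lra. Qed.

Lemma sumR_plus n f g : sumR n (fun i => f i + g i) = sumR n f + sumR n g.
Proof. induction n; [simpl; unfold sumR; simpl; lra|]. rewrite !sumR_S, IHn; lra. Qed.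

Lemma sumR_scal n c f : sumR n (fun i => c * f i) = c * sumR n f.
Proof. induction n; [unfold sumR; simpl; lra|]. rewrite !sumR_S, IHn; lra. Qed.

Lemma sumR_lin3 n f g h al be ga F :
  (forall i, F i = al * f i + be * g i + ga * h i) ->
  sumR n F = al * sumR n f + be * sumR n g + ga * sumR n h.
Proof.
  intros H. induction n; [unfold sumR; simpl; lra|]. rewrite !sumR_S, IHn, H; lra.
Qed.

Lemma sumR_swap m n f :
  sumR m (fun i => sumR n (fun j => f i j)) = sumR n (fun j => sumR m (fun i => f i j)).
Proof.
  induction m.
  - unfold sumR at 1; simpl. rewrite <- (sumR_zero n). apply sumR_ext; reflexivity.
  - rewrite sumR_S, IHm.
    rewrite <- sumR_plus. apply sumR_ext; intros. rewrite sumR_S; reflexivity.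
Qed.

Lemma colsum n (c : nat -> nat -> R) x :
  (forall j, (j < n)%nat -> sumR n (fun i => c i j) = 1) ->
  sumR n (fun i => sumR n (fun j => c i j * x j)) = sumR n x.
Proof.
  intros H. rewrite sumR_swap. apply sumR_ext; intros j Hj.
  transitivity (sumR n (fun i => x j * c i j)).
  - apply sumR_ext; intros; ring.
  - rewrite sumR_scal, H; auto; ring.
Qed.

Lemma delta_sum n i y : (i < n)%nat ->
  sumR n (fun j => if Nat.eqb i j then y j else 0) = y i.
Proof.
  induction n; intros Hi; [lia|].
  rewrite sumR_S. destruct (Nat.eq_dec i n) as [->|Hne].
  - rewrite Nat.eqb_refl. rewrite (sumR_ext n _ (fun _ => 0)), sumR_zero; [lra|].
    intros j Hj. destruct (Nat.eqb_spec n j); [lia|reflexivity].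
  - rewrite IHn by lia. destruct (Nat.eqb_spec i n); [lia|lra].
Qed.

Lemma unif_sum n i d x : (i < n)%nat ->
  sumR n (fun j => (if Nat.eqb i j then 0 else d) * x j) = d * (sumR n x - x i).
Proof.
  intros Hi.
  rewrite (sumR_ext n _ (fun j => d * x j + (-1) * (if Nat.eqb i j then d * x j else 0))).
  - rewrite sumR_plus, sumR_scal, sumR_scal, delta_sum by auto. ring.
  - intros j _. destruct (Nat.eqb i j); ring.
Qed.

Lemma keyid (P sg a m r q g lam s k t : R) :
  sg * sg = 2 * P -> lam = (P - 2) / (a * (P - 4)) -> s = sg / (a * (P - 4)) ->
  k = 2 * a / sg -> t = 2 / (sg * a) ->
  P - 2 <> 0 -> P - 4 <> 0 -> a <> 0 -> sg <> 0 -> sg + 2 * m <> 0 ->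
  (1 + (m * lam + s) * k) * (r + m / a * ((4 + m * sg) / (sg + 2 * m)) * q) =
  (r + (m * lam + s) * g + t * m * q) + (m * lam + s) * (m * q - g + k * r).
Proof.
  intros Hs -> -> -> -> H2 H4 Ha Hsg Hm.
  assert (HP : P = sg * sg / 2) by lra. subst P.
  field. repeat split; auto. intro E; apply H4; lra.
Qed.

Lemma keynz (P sg a m lam s k : R) :
  sg * sg = 2 * P -> lam = (P - 2) / (a * (P - 4)) -> s = sg / (a * (P - 4)) ->
  k = 2 * a / sg -> 3 < P -> P < 4 -> 0 < a -> 0 < sg -> 0 <= m ->
  1 + (m * lam + s) * k <> 0.
Proof.
  intros Hs -> -> -> H3 H4 Ha Hsg Hm.
  assert (HP : P = sg * sg / 2) by lra. subst P.
  replace (1 + (m * ((sg * sg / 2 - 2) / (a * (sg * sg / 2 - 4))) + sg / (a * (sg * sg / 2 - 4))) * (2 * a / sg))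
    with ((sg * sg / 2 - 2) * (sg + 2 * m) / (sg * (sg * sg / 2 - 4))).
  2: { field. repeat split; lra. }
  unfold Rdiv. apply Rmult_integral_contrapositive. split.
  - apply Rmult_integral_contrapositive. split; lra.
  - apply Rinv_neq_0_compat. apply Rmult_integral_contrapositive. split; lra.
Qed.

Theorem mainTheorem10 (a : R) (n : nat) (c : nat -> nat -> R)
  (rho q gam : nat -> R) :
  0 < a -> (2 <= n)%nat ->
  (forall j, (j < n)%nat -> sumR n (fun i => c i j) = 1) ->
  let lam := (PI - 2) / (a * (PI - 4)) in
  let s := sqrt (2 * PI) / (a * (PI - 4)) in
  let k := 2 * a / sqrt (2 * PI) in
  let t := 2 / (sqrt (2 * PI) * a) in
  (forall i, (i < n)%nat ->
     q i - gam i + k * rho i =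
       - sumR n (fun j => c i j * (q j + gam j - k * rho j))) ->
  (forall i, (i < n)%nat ->
     rho i + (lam + s) * gam i + t * q i =
       sumR n (fun j => c i j * (rho j + (s - lam) * gam j - t * q j))) ->
  (sumR n q = 0 /\ sumR n gam = 0) /\
  ((forall i j, (i < n)%nat -> (j < n)%nat ->
      c i j = if Nat.eqb i j then 0 else 1 / (INR n - 1)) ->
   let m := (INR n - 2) / INR n in
   forall i j, (i < n)%nat -> (j < n)%nat ->
     m * q i - gam i + k * rho i = m * q j - gam j + k * rho j /\
     rho i + (m + sqrt (2 * PI) / (PI - 2)) * lam * gam i + t * m * q i =
       rho j + (m + sqrt (2 * PI) / (PI - 2)) * lam * gam j + t * m * q j /\
     rho i + m / a * ((4 + m * sqrt (2 * PI)) / (sqrt (2 * PI) + 2 * m)) * q i =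
       rho j + m / a * ((4 + m * sqrt (2 * PI)) / (sqrt (2 * PI) + 2 * m)) * q j).
Proof.
  intros Ha Hn Hcol lam s k t H1 H2.
  pose proof PI_lt4 as P4. pose proof PI_gt3 as P3.
  assert (Hsg : 0 < sqrt (2 * PI)) by (apply sqrt_lt_R0; lra).
  assert (Hsg2 : sqrt (2 * PI) * sqrt (2 * PI) = 2 * PI) by (apply sqrt_sqrt; lra).
  assert (Elam : lam = (PI - 2) / (a * (PI - 4))) by reflexivity.
  assert (Es : s = sqrt (2 * PI) / (a * (PI - 4))) by reflexivity.
  assert (Ek : k = 2 * a / sqrt (2 * PI)) by reflexivity.
  assert (Et : t = 2 / (sqrt (2 * PI) * a)) by reflexivity.
  clearbody lam s k t.
  set (Q := sumR n q). set (G := sumR n gam). set (R0 := sumR n rho).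
  assert (Hlam : lam <> 0).
  { rewrite Elam. unfold Rdiv. apply Rmult_integral_contrapositive. split; [lra|].
    apply Rinv_neq_0_compat. apply Rmult_integral_contrapositive. split; lra. }
  assert (S1 : sumR n (fun i => q i - gam i + k * rho i) =
               - sumR n (fun i => q i + gam i - k * rho i)).
  { transitivity (sumR n (fun i => (-1) * sumR n (fun j => c i j * (q j + gam j - k * rho j)))).
    - apply sumR_ext; intros; rewrite H1; auto; ring.
    - rewrite sumR_scal, colsum; auto; ring. }
  rewrite (sumR_lin3 n q gam rho 1 (-1) k) in S1 by (intros; ring).
  rewrite (sumR_lin3 n q gam rho 1 1 (-k) (fun i => q i + gam i - k * rho i)) in S1 by (intros; ring).
  fold Q G R0 in S1.
  assert (S2 : sumR n (fun i => rho i + (lam + s) * gam i + t * q i) =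
               sumR n (fun i => rho i + (s - lam) * gam i - t * q i)).
  { transitivity (sumR n (fun i => sumR n (fun j => c i j * (rho j + (s - lam) * gam j - t * q j)))).
    - apply sumR_ext; intros; rewrite H2; auto.
    - rewrite colsum; auto. }
  rewrite (sumR_lin3 n rho gam q 1 (lam + s) t) in S2 by (intros; ring).
  rewrite (sumR_lin3 n rho gam q 1 (s - lam) (-t) (fun i => rho i + (s - lam) * gam i - t * q i)) in S2 by (intros; ring).
  fold Q G R0 in S2.
  assert (HQ : Q = 0) by lra.
  assert (HG : G = 0).
  { rewrite HQ in S2. assert (lam * G = 0) by lra.
    destruct (Rmult_integral _ _ H) as [H'|H']; [contradiction|exact H']. }
  split; [split; assumption|].
  intros Hu m.
  assert (HN : 2 <= INR n) by (replace 2 with (INR 2) by (simpl; lra); apply le_INR; lia).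
  assert (HA : forall i, (i < n)%nat -> m * q i - gam i + k * rho i = k * R0 / INR n).
  { intros i Hi. pose proof (H1 i Hi) as E.
    rewrite (sumR_ext n _ (fun j => (if Nat.eqb i j then 0 else 1 / (INR n - 1)) *
                                   (q j + gam j - k * rho j))) in E
      by (intros; rewrite Hu; auto).
    rewrite unif_sum in E by auto.
    rewrite (sumR_lin3 n q gam rho 1 1 (-k)) in E by (intros; ring).
    fold Q G R0 in E. rewrite HQ, HG in E.
    apply Rminus_diag_uniq.
    transitivity ((INR n - 1) / INR n * ((q i - gam i + k * rho i) -
        (- (1 / (INR n - 1) * (1 * 0 + 1 * 0 + - k * R0 - (q i + gam i - k * rho i)))))).
    - unfold m. field. split; lra.
    - rewrite E. ring. }
  assert (HB : forall i, (i < n)%nat ->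
     rho i + (m * lam + s) * gam i + t * m * q i = R0 / INR n).
  { intros i Hi. pose proof (H2 i Hi) as E.
    rewrite (sumR_ext n _ (fun j => (if Nat.eqb i j then 0 else 1 / (INR n - 1)) *
                                   (rho j + (s - lam) * gam j - t * q j))) in E
      by (intros; rewrite Hu; auto).
    rewrite unif_sum in E by auto.
    rewrite (sumR_lin3 n rho gam q 1 (s - lam) (-t)) in E by (intros; ring).
    fold Q G R0 in E. rewrite HQ, HG in E.
    apply Rminus_diag_uniq.
    transitivity ((INR n - 1) / INR n * ((rho i + (lam + s) * gam i + t * q i) -
        ((1 / (INR n - 1) * (1 * R0 + (s - lam) * 0 + - t * 0 - (rho i + (s - lam) * gam i - t * q i)))))).
    - unfold m. field. split; lra.
    - rewrite E. ring. }
  assert (Ecoef : (m + sqrt (2 * PI) / (PI - 2)) * lam = m * lam + s).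
  { rewrite Elam, Es. field. repeat split; lra. }
  assert (Hm : 0 <= m).
  { unfold m. unfold Rdiv. apply Rmult_le_pos; [lra|]. left; apply Rinv_0_lt_compat; lra. }
  intros i j Hi Hj.
  split; [rewrite !HA; auto|].
  split; [rewrite !Ecoef, !HB; auto|].
  apply (Rmult_eq_reg_l (1 + (m * lam + s) * k)).
  2: { apply (keynz PI (sqrt (2 * PI)) a m lam s k); auto. }
  rewrite (keyid PI (sqrt (2 * PI)) a m (rho i) (q i) (gam i) lam s k t) by (auto; lra).
  rewrite (keyid PI (sqrt (2 * PI)) a m (rho j) (q j) (gam j) lam s k t) by (auto; lra).
  rewrite !HA, !HB by auto. reflexivity.
Qed.
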